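(* Let $f$ be any probability density on $(0,1)$, let $r:=\sup\{p\ge1: f\in\mathcal L^p(0,1)\}$, and assume $r<\infty$ and $n(1-1/r)>1$. Let $X_1,\dots,X_n$ be i.i.d. with density $f$ and $Q=\sum_{i=1}^n(X_i-\overline X)^2$ with cdf $F_Q$. Then $F_Q(x)=o(x^\delta)$ as $x\to0^+$ for every $\delta<\delta_r:=\big(n(1-1/r)-1\big)/2$. *)

(* Defs.v *)
From HB Require Import structures.
From mathcomp Require Import all_boot all_order all_algebra.
From mathcomp Require Import all_classical all_reals all_analysis.
Set Implicit Arguments. Unset Strict Implicit. Unset Printing Implicit Defensive.
Import Order.TTheory GRing.Theory Num.Theory.
Import numFieldNormedType.Exports.
Local Open Scope classical_set_scope.
Local Open Scope ring_scope.

Definition in_Lp01 (R : realType) (f : R -> R) (p : R) : Prop :=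
  (\int[@lebesgue_measure R]_(x in `]0%R, 1%R[%classic) (`|f x| `^ p)%:E < +oo)%E.

Definition Lp_exponents (R : realType) (f : R -> R) : set R :=
  [set p | 1 <= p /\ in_Lp01 f p].

Definition is_density01 (R : realType) (f : R -> R) : Prop :=
  [/\ measurable_fun (`]0%R, 1%R[%classic : set R) f,
      (forall x, 0 < x < 1 -> 0 <= f x) &
      (\int[@lebesgue_measure R]_(x in `]0%R, 1%R[%classic) (f x)%:E = 1)%E].

Definition has_density01 d (T : measurableType d) (R : realType)
  (P : probability T R) (X : {RV P >-> R}) (f : R -> R) : Prop :=
  forall A : set R, measurable A ->
    P (X @^-1` A) =
    (\int[@lebesgue_measure R]_(x in A `&` `]0%R, 1%R[%classic) (f x)%:E)%E.

(* mutual independence of the finite family X_0, ..., X_{n-1}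
   (product rule for all families of Borel sets; taking A i = setT
    covers all subfamilies) *)
Definition mutually_independent d (T : measurableType d) (R : realType)
  (P : probability T R) (n : nat) (X : 'I_n -> {RV P >-> R}) : Prop :=
  forall A : 'I_n -> set R, (forall i, measurable (A i)) ->
    P (\bigcap_(i in [set: 'I_n]) (X i @^-1` A i)) =
    (\prod_(i < n) P (X i @^-1` A i))%E.

Definition Qstat d (T : measurableType d) (R : realType)
  (P : probability T R) (n : nat) (X : 'I_n -> {RV P >-> R}) (w : T) : R :=
  \sum_(i < n) (X i w - (\sum_(j < n) X j w) / n%:R) ^+ 2.

Definition cdfQ d (T : measurableType d) (R : realType)
  (P : probability T R) (n : nat) (X : 'I_n -> {RV P >-> R}) (x : R) : R :=
  fine (P [set w | Qstat X w <= x]).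

(* Main.v *)
Require Import Defs.
From HB Require Import structures.
From mathcomp Require Import all_boot all_order all_algebra.
From mathcomp Require Import all_classical all_reals all_analysis.
From mathcomp Require Import ring lra.
From mathcomp Require Import measurable_realfun.
Import Order.TTheory GRing.Theory Num.Theory.
Import numFieldNormedType.Exports.
Local Open Scope classical_set_scope.
Local Open Scope ring_scope.


Lemma pointwise_bound (R : realType) (h p y : R) : 0 < h -> 1 <= p -> 0 <= y ->
  y <= h `^ (- p^-1) + h `^ (1 - p^-1) * y `^ p.
Proof.
move=> h0 p1 y0.
have p0 : 0 < p by exact: (lt_le_trans ltr01 p1).
set l := h `^ (- p^-1).
have l0 : 0 < l by exact: powR_gt0.
have [yl|ly] := leP y l.
  by rewrite (le_trans yl)// lerDl mulr_ge0// powR_ge0.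
have -> : h `^ (1 - p^-1) * y `^ p = l * (y / l) `^ p.
  have li : l^-1 = h `^ (p^-1) by rewrite /l powRN invrK.
  have hh : h `^ (p^-1 * p) = h.
    by rewrite mulVf ?gt_eqF//; apply: powRr1; exact: ltW.
  have h1 : h `^ (1 - p^-1) = h * l.
    rewrite powRD; last by rewrite (gt_eqF h0) implybT.
    by rewrite /l; congr (_ * _); apply: powRr1; exact: ltW.
  rewrite powRM ?invr_ge0 ?(ltW l0)// li -powRrM hh h1.
  by ring.
have : 1 <= y / l by rewrite ler_pdivlMr// mul1r ltW.
move=> /le1r_powR /(_ p1) yl.
have ey : y = l * (y / l) by rewrite mulrC divfK ?gt_eqF.
rewrite {1}ey (le_trans (ler_wpM2l (ltW l0) yl))//.
by rewrite lerDr ltW.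
Qed.


Lemma int_bound (R : realType) (f : R -> R) (p h : R) (D : set R) :
  is_density01 f -> 1 <= p -> in_Lp01 f p -> 0 < h -> measurable D ->
  D `<=` `]0%R, 1%R[%classic ->
  (lebesgue_measure D <= (3 * h)%:E)%E ->
  (\int[@lebesgue_measure R]_(x in D) (f x)%:E <=
   ((3 + fine (\int[@lebesgue_measure R]_(x in `]0%R, 1%R[%classic) (`|f x| `^ p)%:E))
      * h `^ (1 - p^-1))%:E)%E.
Proof.
move=> [mf f0 _] p1 fLp h0 mD D01 muD.
set L := (\int[@lebesgue_measure R]_(x in `]0%R, 1%R[%classic) (`|f x| `^ p)%:E)%E.
set l := h `^ (- p^-1).
set c := h `^ (1 - p^-1).
have l0 : 0 <= l by exact: powR_ge0.
have c0 : 0 <= c by exact: powR_ge0.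
have m01 : measurable (`]0%R, 1%R[%classic : set R) by [].
have mfD : measurable_fun D f by exact: measurable_funS m01 D01 mf.
have mg : measurable_fun (`]0%R, 1%R[%classic : set R) (fun x => `|f x| `^ p).
  apply: (@measurableT_comp _ _ _ _ _ _ (fun y : R => y `^ p)); first exact: measurable_powR.
  exact: measurableT_comp.
have mgD : measurable_fun D (fun x => `|f x| `^ p) by exact: measurable_funS m01 D01 mg.
have fD x : D x -> 0 <= f x by move=> /D01 /=; rewrite in_itv/= => /andP[a b]; apply: f0; rewrite a b.
apply: (@le_trans _ _ (\int[lebesgue_measure]_(x in D) (l%:E + c%:E * (`|f x| `^ p)%:E))%E).
  apply: ge0_le_integral => //.
  - have := measurableT_comp (@EFin_measurable R setT) mfD; exact.
  - apply: (measurableT_comp (@EFin_measurable R setT) (g := fun x => l + c * `|f x| `^ p)).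
    apply: measurable_funD; first exact: measurable_cst.
    by apply: measurable_funM => //; exact: measurable_cst.
  - move=> x Dx; rewrite -EFinM -EFinD lee_fin ger0_norm ?fD//.
    by apply: pointwise_bound => //; exact: fD.
rewrite ge0_integralD//; last 2 first.
- by move=> x _; rewrite mule_ge0// lee_fin powR_ge0.
- apply: (measurableT_comp (@EFin_measurable R setT) (g := fun x => c * `|f x| `^ p)).
  by apply: measurable_funM => //; exact: measurable_cst.
rewrite integral_cst// ge0_integralZl//; last exact: (measurableT_comp (@EFin_measurable R setT) mgD).
have L0 : (0 <= L)%E by apply: integral_ge0 => x _; rewrite lee_fin powR_ge0.
have Lfin : L \is a fin_num by rewrite ge0_fin_numE.
have LD : (\int[lebesgue_measure]_(x in D) (`|f x| `^ p)%:E <= L)%E.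
  apply: ge0_subset_integral => //.
  exact: (measurableT_comp (@EFin_measurable R setT) mg).
have lh : l * h = c.
  rewrite /c powRD; last by rewrite (gt_eqF h0) implybT.
  by rewrite mulrC; congr (_ * _); apply/esym/powRr1; exact: ltW.
apply: le_trans (leeD (lee_wpmul2l _ muD) (lee_wpmul2l _ LD)) _; rewrite ?lee_fin//.
rewrite -(fineK Lfin) -!EFinM -EFinD lee_fin.
by rewrite mulrCA lh; lra.
Qed.


Lemma Qstat_meas d (T : measurableType d) (R : realType)
  (P : probability T R) (n : nat) (X : 'I_n -> {RV P >-> R}) x :
  measurable [set w | Qstat X w <= x].
Proof.
have mS : measurable_fun setT (fun w => \sum_(j < n) X j w).
  by apply: measurable_sum => j; exact: measurable_funPT.
have mQ : measurable_fun setT (Qstat X).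
  rewrite /Qstat; apply: measurable_sum => i.
  apply: measurable_funX; apply: measurable_funB; first exact: measurable_funPT.
  by apply: measurable_funM => //; exact: measurable_cst.
rewrite -[X in measurable X]setTI.
have -> : [set w | Qstat X w <= x] = Qstat X @^-1` `]-oo, x].
  by apply/seteqP; split => w /=; rewrite in_itv.
exact: mQ.
Qed.

Lemma incl (R : realType) n (a : 'I_n.+1 -> R) x : 0 < x ->
  \sum_(i < n.+1) (a i - (\sum_(j < n.+1) a j) / n.+1%:R) ^+ 2 <= x ->
  0 < a ord0 < 1 ->
  exists k : nat, (k < (Num.truncn (2 * Num.sqrt x)^-1).+1)%N /\
    forall i, (k%:R - 1) * (2 * Num.sqrt x) <= a i <= (k%:R + 2) * (2 * Num.sqrt x).
Proof.
move=> x0 Qx /andP[a00 a01].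
set m := (\sum_(j < n.+1) a j) / n.+1%:R.
set s := Num.sqrt x.
have s0 : 0 < s by rewrite sqrtr_gt0.
have hi i : `|a i - m| <= s.
  rewrite -sqrtr_sqr ler_wsqrtr// (le_trans _ Qx)//.
  rewrite (bigD1 i)//= lerDl; apply: sumr_ge0 => j _; exact: sqr_ge0.
set h := 2 * s.
have h0 : 0 < h by rewrite mulr_gt0.
have a0h : 0 <= a ord0 / h by rewrite divr_ge0// ltW.
have /andP[k1 k2] := truncn_itv a0h.
set k := Num.truncn (a ord0 / h) in k1 k2 *.
have hi0 : 0 <= h^-1 by rewrite invr_ge0 ltW.
have /andP[_ N2] := truncn_itv hi0.
exists k; split.
  rewrite -(ltr_nat R); apply: le_lt_trans k1 _; apply: lt_trans N2.
  by rewrite ltr_pdivrMr// mulVf ?gt_eqF.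
move: k1 k2; rewrite ler_pdivlMr// ltr_pdivrMr// -natr1 => k1 k2.
move=> i; have := hi i; have := hi ord0; rewrite !ler_norml => /andP[u1 u2] /andP[v1 v2].
rewrite /h in k1 k2 *; apply/andP; split; nra.
Qed.

Lemma prob_bound (R : realType) (f : R -> R) (n : nat)
  (d : measure_display) (T : measurableType d) (P : probability T R)
  (X : 'I_n.+1 -> {RV P >-> R}) (p x : R) :
  is_density01 f -> 1 <= p -> in_Lp01 f p ->
  (forall i, has_density01 (X i) f) -> mutually_independent X -> 0 < x ->
  cdfQ X x <= (Num.truncn (2 * Num.sqrt x)^-1).+1%:R *
    (((3 + fine (\int[@lebesgue_measure R]_(y in `]0%R, 1%R[%classic) (`|f y| `^ p)%:E))
       * (2 * Num.sqrt x) `^ (1 - p^-1)) ^+ n.+1).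
Proof.
move=> fd p1 fLp hd ind x0.
set h := 2 * Num.sqrt x.
have h0 : 0 < h by rewrite mulr_gt0// sqrtr_gt0.
set N := (Num.truncn h^-1).+1.
set b := (3 + _) * _.
pose J k : set R := `[(k%:R - 1) * h, (k%:R + 2) * h]%classic.
pose F k := if k is k'.+1 then \bigcap_(i in [set: 'I_n.+1]) (X i @^-1` J k')
            else X ord0 @^-1` (~` `]0%R, 1%R[%classic).
have mF k : measurable (F k).
  case: k => [|k] /=.
    by apply: measurable_funPTI; exact: measurableC.
  apply: fin_bigcap_measurable; first exact: finite_finset.
  by move=> i _; apply: measurable_funPTI; exact: measurable_itv.
have sub : (P [set w | (Qstat X w <= x)%R] <= \sum_(k < N.+1) P (F k))%E.
  apply: (@content_subadditive _ _ _ P) => //; first exact: Qstat_meas.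
  move=> w /= Qw; rewrite -bigcup_mkord.
  have [H|H] := boolP (0 < X ord0 w < 1).
    have [k [kN Hk]] := @incl R n (fun i => X i w) x x0 Qw H.
    exists k.+1 => //=.
    by move=> i _ /=; rewrite /J /= in_itv /= Hk.
  by exists 0%N => //=; rewrite in_itv /=; exact/negP.
have P0 : P (F 0%N) = 0%E.
  rewrite /= hd; last exact: measurableC.
  by rewrite setICl integral_set0.
have fbound k : (P (F k.+1) <= (b ^+ n.+1)%R%:E)%E.
  rewrite /= (ind (fun=> J k)); last by move=> i; exact: measurable_itv.
  set a := (\int[@lebesgue_measure R]_(y in J k `&` `]0%R, 1%R[%classic) (f y)%:E)%E.
  have [mf f0 _] := fd.
  have a0 : (0 <= a)%E.
    apply: integral_ge0 => y [_ /=]; rewrite in_itv /= => yy.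
    by rewrite lee_fin f0.
  have ab : (a <= b%:E)%E.
    apply: int_bound => //.
    - by apply: measurableI => //; exact: measurable_itv.
    - apply: (@le_trans _ _ (lebesgue_measure (J k))).
        have mJ : measurable (J k) by exact: measurable_itv.
        have mJI : measurable (J k `&` `]0%R, 1%R[%classic) by apply: measurableI => //; exact: measurable_itv.
        by apply: le_measure => //; rewrite inE //; exact: mJI.
      rewrite /J /= lebesgue_measure_itv /= lte_fin ifT; last by rewrite ltr_pM2r //; lra.
      by rewrite -EFinD lee_fin; lra.
  have afin : a \is a fin_num by rewrite ge0_fin_numE// (le_lt_trans ab)// ltry.
  rewrite (eq_bigr (fun=> (fine a)%:E)); last first.
    by move=> i _; rewrite hd ?fineK//; exact: measurable_itv.
  rewrite prodEFin lee_fin prodr_const card_ord.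
  apply: lerXn2r; rewrite ?nnegrE ?fine_ge0//.
    by rewrite (le_trans (fine_ge0 a0))// -lee_fin fineK.
  by rewrite -lee_fin fineK.
have : (P [set w | (Qstat X w <= x)%R] <= (N%:R * b ^+ n.+1)%R%:E)%E.
  apply: (le_trans sub); rewrite big_ord_recl P0 add0e.
  apply: (@le_trans _ _ (\sum_(k < N) (b ^+ n.+1)%:E)%E).
    by apply: lee_sum => k _; exact: fbound.
  by rewrite sumEFin lee_fin sumr_const card_ord mulr_natl.
rewrite /cdfQ -lee_fin fineK//.
by apply: fin_num_measure; exact: Qstat_meas.
Qed.


Lemma alg_bound (R : realType) (x L a delta : R) (m : nat) :
  0 < x -> x <= 4^-1 -> 0 <= L -> 0 <= a ->
  (Num.truncn (2 * Num.sqrt x)^-1).+1%:R * (((3 + L) * (2 * Num.sqrt x) `^ a) ^+ m)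
    / x `^ delta <=
  2 * (3 + L) ^+ m * 2 `^ (a * m%:R - 1) * x `^ (2^-1 * (a * m%:R - 1) - delta).
Proof.
move=> x0 x4 L0 a0.
set s := Num.sqrt x.
have s0 : 0 < s by rewrite sqrtr_gt0.
have s2 : s <= 2^-1.
  have sx : s ^+ 2 = x by rewrite sqr_sqrtr// ltW.
  nra.
set h := 2 * s.
have h0 : 0 < h by rewrite mulr_gt0.
have h1 : h <= 1 by rewrite /h; lra.
have N2 : (Num.truncn h^-1).+1%:R <= 2 * h^-1.
  have hi0 : 0 <= h^-1 by rewrite invr_ge0 ltW.
  have := truncn_le (h^-1); rewrite hi0 => T1.
  have : 1 <= h^-1 by rewrite invf_ge1.
  by rewrite -natr1; lra.
have xd0 : 0 < x `^ delta by exact: powR_gt0.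
have E1 : ((h `^ a) ^+ m) = h `^ (a * m%:R).
  by rewrite -powR_mulrn ?powR_ge0// -powRrM.
have E2 : h^-1 * h `^ (a * m%:R) = h `^ (a * m%:R - 1).
  rewrite powRB; last by rewrite (gt_eqF h0) implybT.
  by rewrite mulrC; congr (_ / _); apply/esym/powRr1; exact: ltW.
have E3 : h `^ (a * m%:R - 1) = 2 `^ (a * m%:R - 1) * x `^ (2^-1 * (a * m%:R - 1)).
  by rewrite powRM// ?(ltW s0)// powRrM powR12_sqrt// ltW.
have E4 : x `^ (2^-1 * (a * m%:R - 1)) / x `^ delta = x `^ (2^-1 * (a * m%:R - 1) - delta).
  by rewrite powRB// (gt_eqF x0) implybT.
rewrite exprMn E1 ler_pdivrMr//.
apply: (@le_trans _ _ (2 * h^-1 * ((3 + L) ^+ m * h `^ (a * m%:R)))).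
  by apply: ler_wpM2r => //; rewrite mulr_ge0 ?exprn_ge0 ?powR_ge0//; lra.
rewrite -E4 (_ : 2 * (3 + L) ^+ m * 2 `^ _ * (x `^ _ / x `^ delta) * x `^ delta
   = 2 * (3 + L) ^+ m * h `^ (a * m%:R - 1)); last first.
  by rewrite E3; field; rewrite gt_eqF.
by rewrite -E2 le_eqVlt; apply/orP; left; apply/eqP; ring.
Qed.

Theorem theorem5 (R : realType) (f : R -> R) (n : nat)
  (d : measure_display) (T : measurableType d) (P : probability T R)
  (X : 'I_n -> {RV P >-> R}) :
  is_density01 f ->
  has_ubound (Lp_exponents f) ->
  1 < n%:R * (1 - (sup (Lp_exponents f))^-1) ->
  (forall i, has_density01 (X i) f) ->
  mutually_independent X ->
  forall delta : R,
    delta < (n%:R * (1 - (sup (Lp_exponents f))^-1) - 1) / 2 ->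
    (fun x : R => cdfQ X x / x `^ delta) @ 0^'+ --> 0.
Proof.
move=> fd hub.
case: n X => [|n] X; first by rewrite mul0r ltr10.
move=> hr hd ind delta hdelta.
set S := Lp_exponents f in hub hr hdelta.
set r := sup S in hr hdelta.
have [mf f0 f1] := fd.
have S1 : S 1.
  split => //; rewrite /in_Lp01.
  suff -> : (\int[@lebesgue_measure R]_(x in `]0%R, 1%R[%classic) (`|f x| `^ 1)%:E =
     \int[@lebesgue_measure R]_(x in `]0%R, 1%R[%classic) (f x)%:E)%E by rewrite f1 ltry.
  apply: eq_integral => y; rewrite inE /= in_itv /= => yy.
  by rewrite powRr1 ?normr_ge0// ger0_norm// f0.
have r1 : 1 <= r by have := ub_le_sup hub; apply...
set q := n.+1%:R : R.
have q0 : 0 < q by [].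
set t := Num.max (2 * delta + 1) 1.
have tq : t < q * (1 - r^-1) by rewrite /t; rewrite gt_max; apply/andP; split => //; lra.
set u := 1 - t / q.
have qtq : q * (t / q) = t by rewrite mulrC divfK ?gt_eqF.
have r0 : 0 < r by lra.
have ru : r^-1 < u.
  rewrite /u; have : q * r^-1 < q * (1 - t / q) by rewrite mulrBr mulr1 qtq; lra.
  by rewrite ltr_pM2l.
have u0 : 0 < u by rewrite (lt_trans _ ru)// invr_gt0.
have p0r : u^-1 < r by rewrite -(invrK r) ltf_pV2 ?posrE ?invr_gt0.
have [p Sp p0p] := sup_gt (ex_intro _ 1 S1) p0r.
have [p1 fLp] := Sp.
have pp : 0 < p by lra.
have pu : p^-1 < u by rewrite -(invrK u) ltf_pV2 ?posrE ?invr_gt0.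
set a := 1 - p^-1.
have a0 : 0 <= a by rewrite /a subr_ge0 invf_le1.
set e := a * q - 1.
have te : t < a * q.
  have : q * (1 - u) < q * a by rewrite ltr_pM2l // /a; lra.
  by rewrite /u opprB addrCA subrr addr0 qtq mulrC.
have edel : 0 < 2^-1 * e - delta.
  have : 2 * delta + 1 <= t by rewrite /t le_max lexx.
  rewrite /e; lra.
set L := fine (\int[@lebesgue_measure R]_(y in `]0%R, 1%R[%classic) (`|f y| `^ p)%:E)%E.
have L0 : 0 <= L.
  by apply: fine_ge0; apply: integral_ge0 => y _; rewrite lee_fin powR_ge0.
set K := 2 * (3 + L) ^+ n.+1 * 2 `^ e.
apply: (squeeze_cvgr (f := fun=> 0) (h := fun x => K * x `^ (2^-1 * e - delta))).
- near=> x.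
  have x0 : 0 < x by near: x; exact: nbhs_right_gt.
  have x4 : x <= 4^-1 by apply: ltW; near: x; apply: nbhs_right_lt; rewrite invr_gt0.
  apply/andP; split.
    by rewrite divr_ge0 ?powR_ge0// /cdfQ fine_ge0// measure_ge0.
  have H := @alg_bound R x L a delta n.+1 x0 x4 L0 a0; rewrite -/q -/e -/K in H.
  refine (le_trans _ H).
  rewrite ler_pM2r ?invr_gt0 ?powR_gt0//.
  exact: prob_bound.
- exact: cvg_cst.
- rewrite -[X in _ --> X](mulr0 K); apply: cvgMl_tmp.
  exact: (powR_cvg0 edel).
Unshelve. all: by end_near.
Qed.
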